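(* Let $(\lambda,\vartheta,\zeta_0)$ be fluid model data as in the context. If $\lambda\mathbf E[B1_{\{D=\infty\}}]<1$ and $\mathbf E[\min\{B,D\}]<\infty$, then every fluid model solution $z(\cdot)$ is bounded on $[0,\infty)$.
   Context: $\overline{\mathbb R}_+=[0,\infty]$. Fluid model data: $\lambda>0$; $\vartheta$ a Borel probability measure on $\overline{\mathbb R}_+^2$ with $\vartheta(\{0\}\times\overline{\mathbb R}_+)=\vartheta(\overline{\mathbb R}_+\times\{0\})=\vartheta(\{(\infty,\infty)\})=0$, $(B,D)$ a random pair with law $\vartheta$, $\rho=\lambda\mathbf E[B]>1$; $\zeta_0$ a finite nonnegative Borel measure on $\overline{\mathbb R}_+^2$ with marginals free of atoms in $[0,\infty)$ and total mass $z_0$; if $z_0>0$, $(B^0,D^0)$ has law $\zeta_0/z_0$. A fluid model solution is a continuous function $z:[0,\infty)\to[0,\infty)$ with $\inf_{t>a}z(t)>0$ for all $a>0$ satisfying $z(t)=z_0\mathbf P(B^0>S(0,t);D^0>t)+\lambda\int_0^t\mathbf P(B>S(s,t);D>t-s)ds$ for $t\ge0$, where $S(u,v)=\int_u^vz(s)^{-1}ds$ (the first term is $0$ if $z_0=0$); equivalently $z$ is the total mass of a measure valued fluid model solution. *)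

(* Defs.v *)
From HB Require Import structures.
From mathcomp Require Import all_boot all_order all_algebra.
From mathcomp Require Import all_classical all_reals all_analysis measurable_realfun.
Set Implicit Arguments. Unset Strict Implicit. Unset Printing Implicit Defensive.
Import Order.TTheory GRing.Theory Num.Theory numFieldNormedType.Exports.
Local Open Scope classical_set_scope.
Local Open Scope ring_scope.

(* S(u,v) = int_u^v z(s)^{-1} ds, valued in [0, +oo] (extended real).
   (z is positive on (0,oo), so the convention 0^-1 = 0 at the single point
   s = 0 is irrelevant: it is a Lebesgue-null set.) *)
Definition Sfun (R : realType) (z : R -> R) (u v : R) : \bar R :=
  (\int[@lebesgue_measure R]_(s in `[u, v]) ((z s)^-1)%:E)%E.

Definition quadrant (R : realType) : set (\bar R * \bar R) :=
  [set p | (0 <= p.1)%E /\ (0 <= p.2)%E].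

Definition fluid_data (R : realType) (lam : R)
  (theta : probability (\bar R * \bar R)%type R)
  (zeta0 : {finite_measure set (\bar R * \bar R)%type -> \bar R}) : Prop :=
  [/\ 0 < lam,
      [/\ theta (~` @quadrant R) = 0%E,
        theta [set p | p.1 = 0%E /\ (0 <= p.2)%E] = 0%E,
        theta [set p | (0 <= p.1)%E /\ p.2 = 0%E] = 0%E &
        theta [set (+oo, +oo)%E] = 0%E],
      (1 < lam%:E * \int[theta]_p p.1)%E &
      [/\ zeta0 (~` @quadrant R) = 0%E,
          (forall x : R, 0 <= x ->
             zeta0 [set p | p.1 = x%:E /\ (0 <= p.2)%E] = 0%E) &
          (forall x : R, 0 <= x ->
             zeta0 [set p | (0 <= p.1)%E /\ p.2 = x%:E] = 0%E)]].

(* Fluid model solution. Note z0 P(B^0 > S(0,t); D^0 > t)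
   = zeta0 {(b,d) : b > S(0,t), d > t} (and this is 0 when z0 = 0). *)
Definition fluid_solution (R : realType) (lam : R)
  (theta : probability (\bar R * \bar R)%type R)
  (zeta0 : {finite_measure set (\bar R * \bar R)%type -> \bar R})
  (z : R -> R) : Prop :=
  [/\ {within `[0%R, +oo[, continuous z},
      (forall t, 0 <= t -> 0 <= z t),
      (forall a, 0 < a -> exists c, 0 < c /\ forall t, a < t -> c <= z t) &
      (forall t, 0 <= t ->
         (z t)%:E =
           (zeta0 [set p | (Sfun z 0%R t < p.1)%E /\ (t%:E < p.2)%E]
            + lam%:E * \int[@lebesgue_measure R]_(s in `[0%R, t])
                 theta [set p | (Sfun z s t < p.1)%E /\ ((t - s)%:E < p.2)%E])%E)].

(* Main.v *)
Require Import Defs.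
From HB Require Import structures.
From mathcomp Require Import all_boot all_order all_algebra.
From mathcomp Require Import all_classical all_reals all_analysis measurable_realfun.
From mathcomp Require Import lra.
Import Order.TTheory GRing.Theory Num.Theory numFieldNormedType.Exports.
Local Open Scope classical_set_scope.
Local Open Scope ring_scope.
Local Open Scope ereal_scope.
Lemma mset (R : realType) (i j : interval (\bar R)) :
  measurable [set p : \bar R * \bar R | p.1 \in i /\ p.2 \in j].
Proof.
have := measurableI _ _ (measurable_fst measurableT _ (emeasurable_itv i))
   (measurable_snd measurableT _ (emeasurable_itv j)).
by rewrite !setTI; congr measurable; apply/seteqP; split => p /=; rewrite !inE.
Qed.

Lemma mset_lt (R : realType) (a b : \bar R) :
  measurable [set p : \bar R * \bar R | a < p.1 /\ b < p.2].
Proof.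
have := @mset R (Interval (BRight a) (BInfty _ false)) (Interval (BRight b) (BInfty _ false)).
by congr measurable; apply/seteqP; split => p /=; rewrite !in_itv/= !andbT.
Qed.

Lemma mset_Q (R : realType) :
  measurable (@quadrant R).
Proof.
have := @mset R (Interval (BLeft (0%E : \bar R)) (BInfty _ false)) (Interval (BLeft (0%E : \bar R)) (BInfty _ false)).
by congr measurable; apply/seteqP; split => p /=; rewrite !in_itv/= !andbT.
Qed.
Lemma nullQ (R : realType) (P : probability (\bar R * \bar R)%type R)
  (D : set (\bar R * \bar R)) (f : \bar R * \bar R -> \bar R) :
  P (~` @quadrant R) = 0 -> measurable D -> measurable_fun D f ->
  \int[P]_(x in D) f x = \int[P]_(x in D `&` @quadrant R) f x.
Proof.
move=> P0 mD mf.
have mQ := @mset_Q R.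
rewrite integralE [RHS]integralE.
rewrite (ge0_negligible_integral (measurableC mQ) mD _ _ P0); last 2 first.
- exact: measurable_funepos.
- by move=> x _; exact: funepos_ge0.
rewrite [X in _ - X](ge0_negligible_integral (measurableC mQ) mD _ _ P0); last 2 first.
- exact: measurable_funeneg.
- by move=> x _; exact: funeneg_ge0.
by rewrite setDE setCK.
Qed.

Lemma mset2 (R : realType) (j : interval (\bar R)) :
  measurable [set p : \bar R * \bar R | p.2 \in j].
Proof.
have := @mset R (Interval (BInfty _ true) (BInfty _ false)) j.
by congr measurable; apply/seteqP; split => p /=; rewrite !in_itv/=; [case|].
Qed.

Lemma mset_snd_lt (R : realType) (b : \bar R) :
  measurable [set p : \bar R * \bar R | b < p.2].
Proof.
have := @mset2 R (Interval (BRight b) (BInfty _ false)).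
by congr measurable; apply/seteqP; split => p /=; rewrite !in_itv/= !andbT.
Qed.

Lemma mset_snd_oo (R : realType) :
  measurable [set p : \bar R * \bar R | p.2 = +oo].
Proof.
have := @mset2 R (Interval (BLeft +oo) (BInfty _ false)).
congr measurable; apply/seteqP; split => p /=; rewrite !in_itv/= !andbT.
  by rewrite leye_eq => /eqP.
by move=> ->.
Qed.

Lemma mmin (R : realType) (D : set (\bar R * \bar R)) :
  measurable_fun D (fun p : \bar R * \bar R => Order.min p.1 p.2).
Proof.
apply: measurable_mine.
  exact: measurable_funS _ (@measurable_fst _ _ _ _) => //.
exact: measurable_funS _ (@measurable_snd _ _ _ _) => //.
Qed.

Lemma stepC (R : realType) (lam : R) (theta : probability (\bar R * \bar R)%type R) :
  (0 < lam)%R -> theta (~` @quadrant R) = 0 ->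
  lam%:E * \int[theta]_(p in [set p | p.2 = +oo%E]) p.1 < 1 ->
  \int[theta]_p Order.min p.1 p.2 < +oo ->
  exists K : nat, lam%:E * \int[theta]_(p in @quadrant R `&` [set p | ((K%:R : R)%:E < p.2)]) Order.min p.1 p.2 < 1.
Proof.
move=> lam0 thQ hinf hmin.
have mQ := @mset_Q R.
pose mn := fun p : \bar R * \bar R => Order.min p.1 p.2.
have mn0 : forall p, @quadrant R p -> 0 <= mn p.
  by move=> p [h1 h2]; rewrite /mn le_min h1 h2.
pose fK := fun K : nat => mn \_ [set p | ((K%:R : R)%:E < p.2)].
pose f := mn \_ [set p : \bar R * \bar R | p.2 = +oo].
have mB K : measurable [set p : \bar R * \bar R | ((K%:R : R)%:E < p.2)] by exact: mset_snd_lt.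
have mS := @mset_snd_oo R.
have mfK K : measurable_fun (@quadrant R) (fK K).
  by apply: (proj1 (measurable_restrict mn (mB K) mQ)); exact: mmin.
have mf : measurable_fun (@quadrant R) f.
  by apply: (proj1 (measurable_restrict mn mS mQ)); exact: mmin.
have ff : \forall x \ae theta, @quadrant R x -> fK ^~ x @ \oo --> f x.
  apply: aeW => p [p10 p20].
  apply: cvg_near_cst.
  have [p2oo|p2fin] := eqVneq p.2 +oo.
    rewrite /f /patch mem_set //; near=> n.
    by rewrite /fK /patch mem_set //= p2oo ltey.
  have p2r : p.2 = (fine p.2)%:E.
    by rewrite fineK // ge0_fin_numE // ltey.
  have nS : ~ [set p : \bar R * \bar R | p.2 = +oo] p by move=> /= /eqP; rewrite (negbTE p2fin).
  rewrite /f /patch (memNset nS).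
  near=> n.
  have nB : ~ [set p : \bar R * \bar R | ((n%:R : R)%:E < p.2)] p.
    rewrite /= p2r lte_fin; apply/negP; rewrite -leNgt.
    near: n; exists (Num.truncn (fine p.2)).+1 => // n /= hn.
  apply: ltW; apply: (lt_le_trans (truncnS_gt _)).
  by rewrite ler_nat.
  by rewrite /fK /patch (memNset nB).
have ig : theta.-integrable (@quadrant R) mn.
  apply/integrableP; split; first exact: mmin.
  rewrite (eq_integral mn); last by move=> p /set_mem hp; rewrite gee0_abs // mn0.
  by rewrite -(setTI (@quadrant R)) -nullQ //; exact: mmin.
have fg : \forall x \ae theta, forall n, @quadrant R x -> `|fK n x| <= mn x.
  apply: aeW => p n hp; rewrite /fK /patch; case: ifP => _.
    by rewrite gee0_abs // mn0.
  by rewrite abse0 mn0.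
have [_ _ hcv] := dominated_convergence mQ mfK mf ff ig fg.
have hL : \int[theta]_(x in @quadrant R) f x = \int[theta]_(p in [set p | p.2 = +oo%E]) p.1.
  rewrite [RHS]nullQ //; last first.
    exact: measurable_funS _ (@measurable_fst _ _ _ _) => //.
  rewrite (_ : [set p : \bar R * \bar R | p.2 = +oo] `&` @quadrant R = @quadrant R `&` [set p | p.2 = +oo]); last exact: setIC.
  rewrite (integral_mkcondr theta (@quadrant R) [set p | p.2 = +oo%E]).
  apply: eq_integral => p _.
  rewrite /f /patch; case: ifP => // /set_mem /= h.
  by rewrite /mn h min_l // leey.
have L0 : 0 <= \int[theta]_(x in @quadrant R) f x.
  apply: integral_ge0 => p hp; rewrite /f /patch; case: ifP => // _; exact: mn0.
rewrite -hL in hinf.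
have Lfin : \int[theta]_(x in @quadrant R) f x \is a fin_num.
  rewrite ge0_fin_numE // ltNge; apply/negP; rewrite leye_eq => /eqP hoo.
  by move: hinf; rewrite hoo gt0_muley ?lte_fin.
move: hcv; rewrite -(fineK Lfin) => /fine_cvgP [hfin hl].
have hlt : (fine (\int[theta]_(x in @quadrant R) f x) < lam^-1)%R.
  rewrite -(fineK Lfin) -EFinM lte_fin in hinf.
  by rewrite -(ltr_pM2l lam0) mulfV ?gt_eqF.
have hl2 := cvgr_lt _ hl _ hlt.
have [N _ HN] : \forall n \near \oo, (\int[theta]_(x in @quadrant R) fK n x \is a fin_num) /\
      (fine (\int[theta]_(x in @quadrant R) fK n x) < lam^-1)%R.
  near=> n; split.
    by near: n; exact: hfin.
  by near: n; exact: hl2.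
exists N; have [h1 h2] := HN N (leqnn N).
rewrite integral_mkcondr -(fineK h1) -EFinM lte_fin.
by rewrite -(ltr_pM2l lam0) mulfV ?gt_eqF in h2.
Unshelve. all: end_near. Qed.
Lemma le_integral_nm d (T : measurableType d) (R : realType)
  (mu : {measure set T -> \bar R}) (D : set T) (f g : T -> \bar R) :
  (forall x, D x -> (0 <= f x)%E) -> (forall x, D x -> (f x <= g x)%E) ->
  (\int[mu]_(x in D) f x <= \int[mu]_(x in D) g x)%E.
Proof.
move=> f0 fg.
have g0 : forall x, D x -> (0 <= g x)%E by move=> x Dx; exact: le_trans (f0 _ Dx) (fg _ Dx).
rewrite !ge0_integralE//.
apply: le_ereal_sup => _ [h /= hf <-]; exists h => //= x.
apply: (le_trans (hf x)); rewrite /patch; case: ifP => // /set_mem Dx; exact: fg.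
Qed.
Lemma count_bound (R : realType) (f : nat -> bool) (x : \bar R) M :
  0 <= x -> (forall n, f n -> ((n%:R : R)%:E < x)) ->
  \sum_(n < M) ((f n)%:R : R)%:E <= x + 1.
Proof.
move=> x0 fx.
suff : \sum_(n < M) ((f n)%:R : R)%:E <= (M%:R : R)%:E /\ \sum_(n < M) ((f n)%:R : R)%:E <= x + 1.
  by move=> [_ ->].
elim: M => [|M [IH1 IH2]].
  rewrite big_ord0; split; first by [].
  by rewrite adde_ge0.
rewrite big_ord_recr /=.
case fM: (f M) => /=.
  have HM := fx _ fM.
  have -> : (((true:nat)%:R : R)%:E) = 1 by [].
  rewrite (_ : (M.+1%:R : R)%:E = (M%:R : R)%:E + 1); last by rewrite -EFinD natr1.
  split; first by rewrite leeD2r.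
  apply: (le_trans (y := (M%:R : R)%:E + 1)); first by rewrite leeD2r.
  by rewrite leeD2r// ltW.
have -> : (((false:nat)%:R : R)%:E) = 0 by [].
by rewrite adde0; split => //; apply: (le_trans IH1); rewrite lee_fin ler_nat.
Qed.
Local Close Scope ereal_scope.

Theorem mainTheorem5 (R : realType) (lam : R)
  (theta : probability (\bar R * \bar R)%type R)
  (zeta0 : {finite_measure set (\bar R * \bar R)%type -> \bar R}) :
  fluid_data lam theta zeta0 ->
  (lam%:E * \int[theta]_(p in [set p | p.2 = +oo%E]) p.1 < 1)%E ->
  (\int[theta]_p Order.min p.1 p.2 < +oo)%E ->
  forall z : R -> R, fluid_solution lam theta zeta0 z ->
  exists M : R, forall t : R, 0 <= t -> z t <= M.
Proof.
move=> [lam0 [thQ th1 th2 thoo] rho [z0Q z01 z02]] hinf hmin z [zc zge0 zpos zeq].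
have [K hK] := @stepC R lam theta lam0 thQ hinf hmin.
set cK := (\int[theta]_(p in @quadrant R `&` [set p | ((K%:R : R)%:E < p.2)%E]) Order.min p.1 p.2)%E in hK.
have cK0 : (0 <= cK)%E.
  by apply: integral_ge0 => p [[h1 h2] _]; rewrite le_min h1 h2.
have cKfin : cK \is a fin_num.
  rewrite ge0_fin_numE // ltNge; apply/negP; rewrite leye_eq => /eqP hoo.
  by move: hK; rewrite hoo gt0_muley ?lte_fin.
set c := fine cK.
have cKc : cK = c%:E by rewrite fineK.
have c0 : 0 <= c by rewrite -lee_fin -cKc.
have hlc : lam * c < 1 by rewrite -lte_fin EFinM -cKc.
have z0fin : zeta0 setT \is a fin_num by exact: fin_num_measure.
set z0 := fine (zeta0 setT).
have z0E : zeta0 setT = z0%:E by rewrite fineK.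
have z00 : 0 <= z0 by rewrite -lee_fin -z0E.
pose M := Num.max 1 ((z0 + lam * (K%:R + 2)) / (1 - lam * c)).
exists M => T hT.
have zcT : {within `[0, T], continuous z}.
  apply: continuous_subspaceW zc => x /=; rewrite !in_itv /= => /andP[-> _] //.
have [t tT zmax] := EVT_max hT zcT.
apply: (le_trans (zmax T _)); first by rewrite in_itv /= hT lexx.
have [m1|m1] := leP (z t) 1; first by rewrite le_max m1.
set m := z t.
have KEY : ((z t)%:E <= z0%:E + lam%:E * ((K%:R + 2)%:E + m%:E * cK))%E.
  have t0 : 0 <= t by move: tT; rewrite in_itv /= => /andP[].
  have tTle : t <= T by move: tT; rewrite in_itv /= => /andP[].
  have m0 : 0 < m by apply: lt_trans m1.
  have zle : forall r, 0 <= r <= t -> z r <= m.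
    move=> r /andP[r0 rt]; apply: zmax; rewrite in_itv /= r0 /=; exact: le_trans rt tTle.
  have zgt : forall r, 0 < r -> 0 < z r.
    move=> r r0; have [cc [cc0 hcc]] := zpos (r / 2) (divr_gt0 r0 (ltr0Sn _ 1)).
    by apply: (lt_le_trans cc0); apply: hcc; rewrite ltr_pdivrMr // ltr_pMr // ltr1n.
  pose E := fun n : nat => [set p : \bar R * \bar R | (((n%:R / m)%:E < p.1) /\ ((n%:R)%:E < p.2))%E].
  have mE : forall n, measurable (E n) by move=> n; exact: mset_lt.
  pose A := fun s => [set p : \bar R * \bar R | (Sfun z s t < p.1)%E /\ ((t - s)%:E < p.2)%E].
  have Sbound : forall s, 0 <= s <= t -> (((t - s) / m)%:E <= Sfun z s t)%E.
    move=> s /andP[s0 st].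
    have mI : measurable (`]s, t] : set R) by exact: measurable_itv.
    apply: (@le_trans _ _ (\int[@lebesgue_measure R]_(r in `[s, t]) ((m^-1 * (\1_(`]s, t] : set R) r : R))%:E))%E).
      under eq_integral => r _ do rewrite EFinM.
      have mind : measurable_fun `[s, t] (fun r => ((\1_(`]s, t] : set R) r : R))%:E).
        by apply: measurableT_comp => //; exact: measurable_indic.
      have h0 : forall r, (`[s, t]%classic : set R) r -> (0 <= ((\1_(`]s, t] : set R) r : R))%:E)%E.
        by move=> r _; rewrite lee_fin indicE.
      have hk : (0 <= (m^-1)%:E)%E by rewrite lee_fin invr_ge0 ltW.
      rewrite ge0_integralZl //.
      rewrite integral_indic //.
      rewrite setIidl; last by move=> r /=; exact: subset_itv_oc_cc.
      rewrite -[X in (_ * X)%E]/(lebesgue_measure (`]s, t]%classic : set R)) lebesgue_measure_itv /= lte_fin.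
      case: ltP => hst.
        by rewrite -EFinD -EFinM lee_fin mulrC.
      have -> : s = t by apply/eqP; rewrite eq_le st hst.
      by rewrite subrr mul0r mule0.
    apply: le_integral_nm.
      by move=> r _; rewrite lee_fin indicE mulr_ge0 // invr_ge0 ltW.
    move=> r; rewrite /= in_itv /= => /andP[sr rt].
    rewrite lee_fin indicE.
    have r0 : 0 <= r by exact: le_trans sr.
    case: (boolP (r \in (`]s, t]%classic : set R))) => hr /=.
      rewrite mulr1; move: hr => /set_mem /=; rewrite in_itv /= => /andP[sr' _].
      have rpos : 0 < r by exact: le_lt_trans sr'.
      rewrite lef_pV2 ?posrE ?(zgt _ rpos) //.
      by apply: zle; rewrite r0 rt.
    by rewrite mulr0 invr_ge0 zge0.
  have Asub : forall s (n : nat), 0 <= s <= t -> n%:R <= t - s -> A s `<=` E n.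
    move=> s n hs hn p [hp1 hp2]; split.
      apply: le_lt_trans hp1; apply: le_trans (Sbound s hs); rewrite lee_fin.
      by apply: ler_wpM2r => //; rewrite invr_ge0 ltW.
    by apply: le_lt_trans hp2; rewrite lee_fin.
  rewrite {1}(zeq t t0).
  apply: leeD.
    rewrite -z0E; apply: le_measure => //; rewrite inE; [exact: mset_lt|exact: measurableT].
  apply: lee_wpmul2l; first by rewrite lee_fin ltW.
  have mQ := @mset_Q R.
  pose Nn := (Num.truncn t).+1.
  pose I := fun n : nat => (`](t - n.+1%:R), (t - n%:R)]%classic : set R).
  have mI : forall n, measurable (I n) by move=> n; exact: measurable_itv.
  pose U := fun s : R => (\sum_(n < Nn) (theta (E n) * ((\1_(I n) s : R))%:E))%E.
  have step1 : (\int[lebesgue_measure]_(s in `[0%R, t]) theta (A s) <= \int[lebesgue_measure]_(s in `[0%R, t]) U s)%E.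
    apply: le_integral_nm => s hs; first exact: measure_ge0.
    move: hs => /=; rewrite in_itv /= => /andP[s0 st].
    have hst : 0 <= s <= t by rewrite s0 st.
    have tsge : 0 <= t - s by rewrite subr_ge0.
    have hn0 : (Num.truncn (t - s) < Nn)%N by rewrite ltnS le_truncn // lerBlDr lerDl.
    rewrite /U (bigD1 (Ordinal hn0)) //=.
    apply: le_trans (leeDl _ _); last first.
      by apply: sume_ge0 => i _; apply: mule_ge0 => //; rewrite lee_fin indicE.
    have -> : (\1_(I (Num.truncn (t - s))) s : R) = 1.
      rewrite indicE mem_set // /I /= in_itv /=; apply/andP; split.
        by have := truncnS_gt (t - s); lra.
      by have := truncn_le (t - s); rewrite tsge; lra.
    rewrite mule1; apply: le_measure; rewrite ?inE; [exact: mset_lt | exact: mE |].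
    by apply: Asub => //; rewrite truncn_le.
  have step2 : (\int[lebesgue_measure]_(s in `[0%R, t]) U s <= \sum_(n < Nn) theta (E n))%E.
    have mU : forall n : 'I_Nn, measurable_fun `[0%R, t] (fun s => theta (E n) * ((\1_(I n) s : R))%:E)%E.
      move=> n; apply: measurable_funeM; apply: measurableT_comp => //; exact: measurable_indic.
    have U0 : forall (n : 'I_Nn) s, (`[0%R, t]%classic : set R) s -> (0 <= theta (E n) * ((\1_(I n) s : R))%:E)%E.
      by move=> n s _; apply: mule_ge0 => //; rewrite lee_fin indicE.
    rewrite /U ge0_integral_sum //.
    apply: lee_sum => n _.
    rewrite ge0_integralZl //.
    rewrite integral_indic //.
    apply: le_trans (lee_wpmul2l (measure_ge0 _ _) (_ : _ <= 1)%E) _; last by rewrite mule1.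
    rewrite -[X in (X <= _)%E]/(lebesgue_measure (I n `&` `[0%R, t]%classic)).
    apply: (@le_trans _ _ (lebesgue_measure (I n))).
      apply: le_measure; rewrite ?inE.
      - by apply: measurableI => //; exact: measurable_itv.
      - exact: mI.
      - exact: subIsetl.
    rewrite -[X in (X <= _)%E]/(lebesgue_measure (I n)) lebesgue_measure_itv /= lte_fin.
    rewrite ifT; last by rewrite ltrD2l ltrN2 ltr_nat.
    by rewrite -EFinD lee_fin; lra.
    exact: mI.
    have mind : measurable_fun `[0%R, t] (fun s => ((\1_(I n) s : R))%:E).
      by apply: measurableT_comp => //; exact: measurable_indic.
    exact: mind.
  have step3 : (\sum_(n < Nn) theta (E n) <= (K%:R + 2)%:E + m%:E * cK)%E.
    have eqi : forall n, theta (E n) = (\int[theta]_p ((\1_(E n) p : R))%:E)%E.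
      by move=> n; rewrite integral_indic // setIT.
    have mi : forall n : 'I_Nn, measurable_fun setT (fun p => ((\1_(E n) p : R))%:E).
      by move=> n; apply: measurableT_comp => //; exact: measurable_indic.
    have i0 : forall (n : 'I_Nn) p, setT p -> (0 <= ((\1_(E n) p : R))%:E)%E.
      by move=> n p _; rewrite lee_fin indicE.
    under eq_bigr do rewrite eqi.
    rewrite -(ge0_integral_sum _ measurableT mi i0).
    rewrite nullQ //; last exact: emeasurable_sum.
    rewrite setTI.
    pose B := [set p : \bar R * \bar R | ((K%:R : R)%:E < p.2)%E].
    have mB : measurable B by exact: mset_snd_lt.
    pose h := fun p : \bar R * \bar R => (1 + m%:E * Order.min p.1 p.2)%E.
    have mh : measurable_fun (@quadrant R `&` B) h.
      by apply: emeasurable_funD => //; apply: measurable_funeM; exact: mmin.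
    have mn0 : forall p, @quadrant R p -> (0 <= Order.min p.1 p.2)%E.
      by move=> p [h1 h2]; rewrite le_min h1 h2.
    have h0 : forall p, @quadrant R p -> (0 <= h p)%E.
      by move=> p hp; rewrite /h adde_ge0 // mule_ge0 ?mn0 // lee_fin ltW.
    pose G := fun p => ((K%:R + 1)%:E + (h \_ B) p)%E.
    apply: (@le_trans _ _ (\int[theta]_(p in @quadrant R) G p)%E).
      apply: le_integral_nm => p hp.
        by apply: sume_ge0 => i _; rewrite lee_fin indicE.
      have [p10 p20] := hp.
      under eq_bigr do rewrite indicE.
      rewrite /G /patch; case: (boolP (p \in B)) => hB.
        set x := (m%:E * Order.min p.1 p.2)%E.
        have x0 : (0 <= x)%E by rewrite /x mule_ge0 ?mn0 // lee_fin ltW.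
        apply: (le_trans (@count_bound R (fun n => p \in E n) x Nn x0 _)).
          move=> n /set_mem [h1 h2].
          have [le12|le21] := leP p.1 p.2.
            rewrite /x min_l //; rewrite -lte_pdivrMl //.
            by rewrite -EFinM mulrC.
          rewrite /x min_r ?ltW //; apply: lt_le_trans h2 _.
          by apply: lee_pemull => //; rewrite lee_fin ltW.
        rewrite /h (addeC x 1%E) [X in (_ <= X)%E]addeC; apply: leeDl.
        by rewrite lee_fin addr_ge0.
      have hp2 : (p.2 <= (K%:R : R)%:E)%E.
        rewrite leNgt; apply/negP => hk; move/negP: hB; apply; exact: mem_set hk.
      have K0 : (0 <= (K%:R : R)%:E)%E by rewrite lee_fin.
      apply: (le_trans (@count_bound R (fun n => p \in E n) _ Nn K0 _)).
        by move=> n /set_mem [h1 h2]; apply: lt_le_trans h2 hp2.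
      have -> : (point : \bar R) = 0%E by [].
      by rewrite adde0 EFinD.
    have mhB : measurable_fun (@quadrant R) (h \_ B) := proj1 (measurable_restrict h mB mQ) mh.
    have hB0 : forall p, @quadrant R p -> (0 <= (h \_ B) p)%E.
      by move=> p hp; rewrite /patch; case: ifP => // _; exact: h0.
    have c0' : forall p, @quadrant R p -> (0 <= ((K%:R + 1 : R))%:E)%E.
      by move=> p _; rewrite lee_fin.
    rewrite /G (ge0_integralD _ mQ c0' (measurable_cst _) hB0 mhB).
    rewrite integral_cst // -(integral_mkcondr theta (@quadrant R) B h).
    have mQB : measurable (@quadrant R `&` B) by exact: measurableI.
    have one0 : forall p, (@quadrant R `&` B) p -> (0 <= (1 : \bar R))%E by [].
    have mm0 : forall p, (@quadrant R `&` B) p -> (0 <= m%:E * Order.min p.1 p.2)%E.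
      by move=> p [hp _]; rewrite mule_ge0 ?mn0 // lee_fin ltW.
    have mmm : measurable_fun (@quadrant R `&` B) (fun p => m%:E * Order.min p.1 p.2)%E.
      by apply: measurable_funeM; exact: mmin.
    rewrite /h (ge0_integralD _ mQB one0 (measurable_cst _) mm0 mmm).
    rewrite integral_cst // ge0_integralZl //; first last.
    - by rewrite lee_fin ltW.
    - by move=> p [hp _]; exact: mn0.
    - exact: mmin.
    have hQ := probability_le1 theta mQ.
    have hQB := probability_le1 theta mQB.
    rewrite mul1e addeA; apply: leeD; last exact: lexx.
    apply: le_trans (leeD (lee_wpmul2l _ hQ) hQB) _; first by rewrite lee_fin.
    by rewrite mule1 -EFinD lee_fin; lra.
  exact: le_trans step1 (le_trans step2 step3).
rewrite cKc -!EFinM -!EFinD lee_fin in KEY.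
rewrite le_max; apply/orP; right.
have h1 : 0 < 1 - lam * c by rewrite subr_gt0.
rewrite ler_pdivlMr //.
rewrite -/m in KEY.
nra.
Qed.
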